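(* Let $n\ge1$ and let $i,j,k\in\{0,\dots,2^n-1\}$ be mutually distinct. (a) If $i\,n\,j$ and $j\,n\,k$, then not $i\,n\,k$; if $i\,n\,j$ and ($j\,d\,k$ or $j\,c\,k$), then $i\,n\,k$. (b) If $i\,c\,j$ and $j\,c\,k$, then $i\,c\,k$. (c) If $i\,d\,j$ and $j\,d\,k$, then $i\,c\,k$. (d) If $i\,c\,j$ and $j\,d\,k$, then $i\,d\,k$.
   Context: For $n\ge1$, an $n$-path is a string $\alpha_0\alpha_1\cdots\alpha_n$ with $\alpha_k\in\{0,1\}$, $\alpha_0=0$; the $n$-paths are identified with $\{0,\dots,2^n-1\}$, the path $\omega_j$ being the one whose string is the binary representation of $j$ (with $\alpha_n$ least significant). $D^n$ is the $2^n\times 2^n$ matrix with $D^n_{jk}=D^n(\omega_j,\omega_k)$, where $D^n(\omega,\omega')=2^{-n}\prod_{k=1}^n i^{|\alpha_k-\alpha_{k-1}|}\prod_{k=1}^n i^{-|\alpha'_k-\alpha'_{k-1}|}\,\delta_{\alpha_n\alpha'_n}$ for $\omega=\alpha_0\cdots\alpha_n$, $\omega'=\alpha'_0\cdots\alpha'_n$ (here $i=\sqrt{-1}$). For distinct indices $p,q$ the interference term is $I^n_{pq}=2\,\mathrm{Re}\,D^n_{pq}$. We write $p\,n\,q$ if $I^n_{pq}=0$, $p\,c\,q$ if $I^n_{pq}>0$, and $p\,d\,q$ if $I^n_{pq}<0$. *)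

(* Defs.v *)
From HB Require Import structures.
From mathcomp Require Import all_boot all_order all_algebra all_field.
Set Implicit Arguments. Unset Strict Implicit. Unset Printing Implicit Defensive.
Import Order.TTheory GRing.Theory Num.Theory.
Local Open Scope ring_scope.

(* The n-path omega_j : the string alpha_0 alpha_1 ... alpha_n which is the
   binary representation of j (alpha_n least significant), padded to length
   n+1.  [alpha n j k] is the digit alpha_k of omega_j (0 <= k <= n).
   For j < 2^n we have alpha_0 = 0. *)
Definition alpha (n j k : nat) : nat := odd (j %/ 2 ^ (n - k)).

Definition jump (n j k : nat) : nat := `|(alpha n j k)%:Z - (alpha n j k.-1)%:Z|%N.

Definition Dn (n p q : nat) : algC :=
  (2%:R ^- n) * (\prod_(k < n) 'i ^+ jump n p k.+1)
              * (\prod_(k < n) ('i ^+ jump n q k.+1)^-1)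
              * (alpha n p n == alpha n q n)%:R.

Definition Dmx (n : nat) : 'M[algC]_(2 ^ n) := \matrix_(p, q) Dn n p q.

Definition Interf (n : nat) (p q : 'I_(2 ^ n)) : algC := 2 * 'Re (Dmx n p q).

Definition rel_n n (p q : 'I_(2 ^ n)) : Prop := Interf p q = 0.
Definition rel_c n (p q : 'I_(2 ^ n)) : Prop := 0 < Interf p q.
Definition rel_d n (p q : 'I_(2 ^ n)) : Prop := Interf p q < 0.

(* Main.v *)
Require Import Defs.
From mathcomp Require Import all_boot all_order all_algebra all_field.
From mathcomp Require Import zify.
Import Order.TTheory GRing.Theory Num.Theory.
Local Open Scope ring_scope.

Definition JJ (n p : nat) : nat := (\sum_(k < n) jump n p k.+1)%N.

Lemma parity n p m : (m <= n)%N ->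
  odd (\sum_(k < m) jump n p k.+1)%N = (odd (p %/ 2 ^ (n - m)) != odd (p %/ 2 ^ n)).
Proof.
elim: m => [|m IH] hm.
  by rewrite big_ord0 subn0 eqxx.
rewrite big_ord_recr /= oddD IH; last by apply: ltnW.
rewrite /jump /alpha /=.
case: (odd (p %/ 2 ^ (n - m.+1))); case: (odd (p %/ 2 ^ (n - m)));
  case: (odd (p %/ 2 ^ n)); by [].
Qed.

Lemma iX4 (m : nat) : 'i ^+ m = 'i ^+ (m %% 4) :> algC.
Proof.
have h4 : 'i ^+ 4 = 1 :> algC.
  by rewrite (exprM _ 2 2) sqrCi expr2 mulrNN mulr1.
by rewrite {1}(divn_eq m 4) exprD mulnC exprM h4 expr1n mul1r.
Qed.

Lemma iinv (b : nat) : (b <= 4)%N -> ('i ^+ b)^-1 = 'i ^+ (4 - b) :> algC.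
Proof.
move=> hb.
have nz : 'i ^+ b != 0 :> algC by rewrite expf_neq0 // neq0Ci.
apply: (mulfI nz); rewrite divff // -exprD subnKC //.
by rewrite (exprM _ 2 2) sqrCi expr2 mulrNN mulr1.
Qed.

Definition sg (a b : nat) : int :=
  if odd a == odd b then (if a == b then 1 else -1) else 0.

Lemma alphan n p : (p < 2 ^ n)%N -> alpha n p n = odd (JJ n p).
Proof.
move=> hp; rewrite /JJ parity // /alpha subnn expn0 divn1 (divn_small hp).
by case: (odd p).
Qed.

Lemma Dn_eq n p q : (p < 2 ^ n)%N -> (q < 2 ^ n)%N ->
  Dn n p q = 2%:R ^- n * (sg (JJ n p %% 4) (JJ n q %% 4))%:~R.
Proof.
move=> hp hq; rewrite /Dn prodfV !prodrXr -/(JJ n p) -/(JJ n q).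
rewrite !alphan //.
have -> : (nat_of_bool (odd (JJ n p)) == nat_of_bool (odd (JJ n q)))
       = (odd (JJ n p %% 4) == odd (JJ n q %% 4)).
  by rewrite !odd_mod //; case: (odd (JJ n p)); case: (odd (JJ n q)).
rewrite (iX4 (JJ n p)) (iX4 (JJ n q)) -!mulrA; congr (_ * _).
have : (JJ n p %% 4 < 4)%N by rewrite ltn_mod.
have : (JJ n q %% 4 < 4)%N by rewrite ltn_mod.
move: (JJ n p %% 4)%N (JJ n q %% 4)%N => a b hb ha.
rewrite mulrA iinv; last by apply: ltnW.
rewrite -exprD iX4.
have [->|[->|[->|->]]] : a = 0%N \/ a = 1%N \/ a = 2%N \/ a = 3%N by lia.
all: have [->|[->|[->|->]]] : b = 0%N \/ b = 1%N \/ b = 2%N \/ b = 3%N by lia.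
all: rewrite /sg /modn /=.
all: rewrite ?mulr0 ?mulr1 ?expr0 ?sqrCi.
all: by rewrite ?mulrNz.
Qed.

Lemma Interf_eq n (p q : 'I_(2 ^ n)) :
  Interf p q = (2 * 2%:R ^- n) * (sg (JJ n p %% 4) (JJ n q %% 4))%:~R.
Proof.
rewrite /Interf /Dmx mxE Dn_eq // -mulrA; congr (_ * _).
apply/Creal_ReP.
by rewrite realM // ?realV ?realX ?realn ?realz // rpred_int.
Qed.

Lemma rel_spec n (p q : 'I_(2 ^ n)) :
  (rel_n p q <-> ~~ (odd (JJ n p %% 4) == odd (JJ n q %% 4))) /\
  (rel_c p q <-> (JJ n p %% 4 == JJ n q %% 4)%N) /\
  (rel_d p q <-> (odd (JJ n p %% 4) == odd (JJ n q %% 4)) && (JJ n p %% 4 != JJ n q %% 4)%N).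
Proof.
rewrite /rel_n /rel_c /rel_d Interf_eq /sg.
have hc : 0 < 2 * 2%:R ^- n :> algC by rewrite mulr_gt0 // invr_gt0 exprn_gt0.
move: (2 * 2%:R ^- n) hc => c hc.
move: (JJ n p %% 4)%N (JJ n q %% 4)%N => a b.
have hc' : ~ (c < 0) by move=> h; have := lt_trans h hc; rewrite ltxx.
have hc0 : c <> 0 by move=> h; move: hc; rewrite h ltxx.
case: (a =P b) => [<-|hab]; rewrite ?eqxx /=.
  rewrite mulr1z mulr1; split; [|split]; split => // h; exfalso; by [apply: hc0|apply: hc'].
case: (odd a == odd b) => /=.
  rewrite mulrN1z mulrN1; split; [|split]; split => // h.
  - by exfalso; apply: hc0; apply/eqP; rewrite -oppr_eq0 h.
  - by exfalso; apply: hc'; rewrite -oppr_gt0.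
  - by rewrite oppr_lt0.
rewrite mulr0z mulr0; split; [|split]; split => // h; exfalso.
all: by rewrite ltxx in h.
Qed.

Lemma conv (P : Prop) (b : bool) : (P <-> b) -> (P <-> if b then True else False).
Proof.
case: b => -[h1 h2]; split.
- by [].
- by move=> _; apply: h2.
- by move/h1.
- by [].
Qed.

Theorem corollary2p2 (n : nat) (hn : (1 <= n)%N) (i j k : 'I_(2 ^ n))
  (hij : i != j) (hjk : j != k) (hik : i != k) :
  ((rel_n i j -> rel_n j k -> ~ rel_n i k) /\
   (rel_n i j -> (rel_d j k \/ rel_c j k) -> rel_n i k)) /\
  (rel_c i j -> rel_c j k -> rel_c i k) /\
  (rel_d i j -> rel_d j k -> rel_c i k) /\
  (rel_c i j -> rel_d j k -> rel_d i k).
Proof.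
have n1 := @conv _ _ (proj1 (rel_spec n i j)).
have c1 := @conv _ _ (proj1 (proj2 (rel_spec n i j))).
have d1 := @conv _ _ (proj2 (proj2 (rel_spec n i j))).
have n2 := @conv _ _ (proj1 (rel_spec n j k)).
have c2 := @conv _ _ (proj1 (proj2 (rel_spec n j k))).
have d2 := @conv _ _ (proj2 (proj2 (rel_spec n j k))).
have n3 := @conv _ _ (proj1 (rel_spec n i k)).
have c3 := @conv _ _ (proj1 (proj2 (rel_spec n i k))).
have d3 := @conv _ _ (proj2 (proj2 (rel_spec n i k))).
move: n1 c1 d1 n2 c2 d2 n3 c3 d3.
have : (JJ n i %% 4 < 4)%N by rewrite ltn_mod.
have : (JJ n j %% 4 < 4)%N by rewrite ltn_mod.
have : (JJ n k %% 4 < 4)%N by rewrite ltn_mod.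
move: (JJ n i %% 4)%N (JJ n j %% 4)%N (JJ n k %% 4)%N => a b c hc hb ha.
have [->|[->|[->|->]]] : a = 0%N \/ a = 1%N \/ a = 2%N \/ a = 3%N by lia.
all: have [->|[->|[->|->]]] : b = 0%N \/ b = 1%N \/ b = 2%N \/ b = 3%N by lia.
all: have [->|[->|[->|->]]] : c = 0%N \/ c = 1%N \/ c = 2%N \/ c = 3%N by lia.
all: move=> /= n1 c1 d1 n2 c2 d2 n3 c3 d3.
all: tauto.
Qed.
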